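(* Let $G$ be an infinite, connected, countable, locally finite $d$-regular graph equipped with a random labeling. Then with probability $1$ the following holds: for every $n\in\mathbb{N}$ there are infinitely many pairs $(v,\ell)$, with $v$ a vertex and $\ell\in\{1,\dots,d\}$ a port, such that the basic walk starting at $v$ with initial port $\ell$ visits (at least) $n$ distinct vertices.
   Context: Each undirected edge $\{v,w\}$ is regarded as two arcs $v\to w$ and $w\to v$. A labeling assigns, at each vertex $v$, the port numbers $1,\dots,d$ bijectively to the $d$ arcs leaving $v$ (labels on $v\to w$ and $w\to v$ need not agree). In a random labeling these bijections are chosen uniformly at random, independently for different vertices. Given a labeling, a starting vertex $v_0$ and an initial port $\ell$, the basic walk leaves $v_0$ along the arc labeled $\ell$; thereafter, whenever it enters a vertex $v$ along an arc whose label is $i$, it leaves $v$ along the arc out of $v$ labeled $(i \bmod d)+1$. *)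

(* Defs.v *)
From mathcomp Require Import all_boot all_order all_algebra.
Set Implicit Arguments. Unset Strict Implicit. Unset Printing Implicit Defensive.
Import Order.TTheory GRing.Theory Num.Theory.
Local Open Scope ring_scope.

Definition simple_graph (V : countType) (adj : rel V) : Prop :=
  (forall v w, adj v w = adj w v) /\ (forall v, ~~ adj v v).

Definition regular_graph (V : countType) (adj : rel V) (d : nat) : Prop :=
  forall v, exists s : seq V, [/\ uniq s, size s = d & forall w, adj v w = (w \in s)].

Definition connected_graph (V : countType) (adj : rel V) : Prop :=
  forall v w : V, exists p : seq V, path adj v p /\ last v p = w.

Definition infinite_type (V : countType) : Prop :=
  forall s : seq V, exists v : V, v \notin s.

(* A labeling: at each vertex v, port i : 'I_d (port i+1 in 1-based numbering)
   is the arc v -> lab v i; lab v must be a bijection from ports onto the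
   neighbours of v. *)
Definition labeling (V : countType) (adj : rel V) (d : nat)
  (lab : V -> 'I_d -> V) : Prop :=
  forall v, injective (lab v) /\ (forall w, adj v w <-> exists i, lab v i = w).

(* Basic walk: states (current vertex, port along which it leaves).  Entering
   a vertex along an arc labeled i (0-based), it leaves along port (i+1) mod d,
   i.e. ordS i, which is the 0-based version of (i mod d)+1. *)
Fixpoint basic_walk (V : countType) (d : nat) (lab : V -> 'I_d -> V)
  (v0 : V) (l : 'I_d) (k : nat) : V * 'I_d :=
  match k with
  | 0 => (v0, l)
  | k'.+1 => let s := basic_walk lab v0 l k' in (lab s.1 s.2, ordS s.2)
  end.

Definition visits_at_least (V : countType) (d : nat) (lab : V -> 'I_d -> V)
  (v0 : V) (l : 'I_d) (n : nat) : Prop :=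
  exists k, (n <= size (undup [seq (basic_walk lab v0 l j).1 | j <- iota 0 k]))%N.

(* Cylinder sets of the random labeling: a finite list of (vertex, bijection)
   constraints on distinct vertices. *)
Definition in_cylinder (V : countType) (d : nat) (lab : V -> 'I_d -> V)
  (c : seq (V * {ffun 'I_d -> V})) : Prop :=
  forall p, p \in c -> forall i, lab p.1 i = p.2 i.

(* probability of a cylinder (with distinct, admissible constraints) under the
   random labeling: each vertex's bijection is uniform among the d! bijections,
   independently, so a cylinder constraining c vertices has probability
   (1/d!)^c.  (Constraints by non-admissible maps give empty cylinders, for
   which this weight is only an overestimate; such cylinders are useless in
   covers, so nullness below is unaffected.) *)
Definition cyl_weight (V : countType) (d : nat) (c : seq (V * {ffun 'I_d -> V})) : rat :=
  ((d`!)%:R^-1 : rat) ^+ size c.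

(* "E holds with probability 1 for the random labeling": the set of labelings
   violating E has outer measure 0 for the product (random-labeling) measure,
   i.e. for every eps > 0 it is covered by countably many cylinders of total
   probability <= eps. *)
Definition almost_surely (V : countType) (adj : rel V) (d : nat)
  (E : (V -> 'I_d -> V) -> Prop) : Prop :=
  forall eps : rat, 0 < eps ->
  exists C : nat -> seq (V * {ffun 'I_d -> V}),
    [/\ forall k, uniq (map fst (C k)),
        forall lab, labeling adj lab -> ~ E lab -> exists k, in_cylinder lab (C k)
      & forall m, \sum_(k < m) cyl_weight (C k) <= eps].

(* Main.v *)
Require Import Defs.
From Stdlib Require Import Classical ClassicalEpsilon.
From mathcomp Require Import all_boot all_order all_algebra all_fingroup.
From mathcomp Require Import zify ring lra.
Set Implicit Arguments. Unset Strict Implicit. Unset Printing Implicit Defensive.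
Import Order.TTheory GRing.Theory Num.Theory.

Section Graph.
Variables (V : countType) (adj : rel V) (N : V -> seq V).
Hypothesis adjC : forall v w, adj v w = adj w v.
Hypothesis HN : forall v w, adj v w = (w \in N v).
Hypothesis conn : connected_graph adj.
Hypothesis inf : infinite_type V.
Variable b : V.

Fixpoint ball r := if r is r'.+1 then ball r' ++ flatten (map N (ball r')) else [:: b].

Lemma ball_sub r r' : r <= r' -> {subset ball r <= ball r'}.
Proof.
move=> /subnK <-; elim: (r' - r) => //= k IH x /IH.
by rewrite ?addSn /= mem_cat => ->.
Qed.

Lemma ball_step r x y : x \in ball r -> adj x y -> y \in ball r.+1.
Proof.
move=> Hx Hxy; rewrite /= mem_cat; apply/orP; right.
by apply/flatten_mapP; exists x => //; rewrite -HN.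
Qed.

Lemma ball_path p : forall x r, x \in ball r -> path adj x p -> last x p \in ball (r + size p).
Proof.
elim: p => [|y p IH] x r Hx /=; first by rewrite addn0.
case/andP=> Hxy Hp; rewrite addnS -addSn; apply: IH => //.
exact: ball_step Hxy.
Qed.

Lemma in_some_ball v : exists r, v \in ball r.
Proof.
have [p [Hp Hl]] := conn b v; exists (0 + size p); rewrite -Hl.
by apply: ball_path; rewrite ?mem_head.
Qed.

Definition dist v := @ex_minn (fun r => v \in ball r) (in_some_ball v).

Lemma dist_ball v : v \in ball (dist v).
Proof. by rewrite /dist; case: ex_minnP. Qed.

Lemma dist_min v r : v \in ball r -> dist v <= r.
Proof. by rewrite /dist; case: ex_minnP => m _ H /H. Qed.

Lemma dist_adj v w : adj v w -> dist w <= (dist v).+1.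
Proof. by move=> H; apply: dist_min; apply: ball_step H; apply: dist_ball. Qed.

Lemma dist_down v m : dist v = m.+1 -> exists w, adj v w /\ dist w = m.
Proof.
move=> Hd; have := dist_ball v; rewrite Hd /= mem_cat => /orP [H|].
  by have := dist_min H; rewrite Hd ltnn.
case/flatten_mapP => w Hw; rewrite -HN => Hwv.
exists w; split; first by rewrite adjC.
apply/eqP; rewrite eqn_leq dist_min //=.
have := dist_adj Hwv; rewrite Hd ltnS => ->; done.
Qed.

Definition E x y := adj x y && ((dist y).+1 == dist x).

Lemma descend k : forall v, k <= dist v -> exists t, size t = k /\ path E v t.
Proof.
elim: k => [|k IH] v Hk; first by exists [::].
have Hd : dist v = (dist v).-1.+1 by rewrite prednK //; apply: leq_ltn_trans Hk.
have [w [Hvw Hw]] := dist_down Hd.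
have [t [Ht Hp]] : exists t, size t = k /\ path E w t by apply: IH; rewrite Hw -ltnS -Hd.
exists (w :: t); split; first by rewrite /= Ht.
by rewrite /= Hp /E Hvw Hw -Hd eqxx.
Qed.

Lemma path_props t : forall v, path E v t ->
  [/\ path adj v t, uniq (v :: t) & all (fun x => dist v - size t <= dist x) (v :: t)].
Proof.
move=> v Hp; split.
- by apply: sub_path Hp => x y /andP [].
- apply: (@sorted_uniq _ (fun x y => dist y < dist x)).
  + by move=> y x z /= H1 H2; apply: ltn_trans H2 H1.
  + by move=> x /=; rewrite ltnn.
  + by apply: sub_path Hp => x y /andP [_ /eqP <-].
- elim: t v Hp => [|y t IH] v /=; first by rewrite subn0 leqnn.
  case/andP=> /andP [_ /eqP Hy] Hp; have := IH y Hp => /= /andP [H1 H2].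
  rewrite leq_subr /=; apply/andP; split.
    by apply: leq_trans (leq_trans _ H1) _; lia.
  apply: sub_all H2 => x /= Hx; apply: leq_trans Hx; lia.
Qed.

Lemma long_path (X : seq V) (m : nat) : exists x t,
  [/\ size t = m, path adj x t, uniq (x :: t) & all (fun y => y \notin X) (x :: t)].
Proof.
pose R := \max_(y <- X) dist y.
have [v Hv] := inf (ball (R + m)).
have Hdv : R + m < dist v.
  rewrite ltnNge; apply/negP => H; move: Hv; rewrite (ball_sub H) //; exact: dist_ball.
have [t [Ht Hp]] := descend (leq_trans (leq_addl R m) (ltnW Hdv)).
have [H1 H2 H3] := path_props Hp.
exists v, t; split => //; apply: sub_all H3 => y /= Hy.
apply/negP => HX; have := @leq_bigmax_seq _ X xpredT dist y HX isT.
rewrite -/R; move: Hy; rewrite Ht; lia.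
Qed.

End Graph.

Local Open Scope ring_scope.

Section Cyl.
Variables (V : countType) (d : nat) (N : V -> seq V).
Hypothesis Nuniq : forall v, uniq (N v).
Hypothesis Nsize : forall v, size (N v) = d.

Definition Fmk v (s : {perm 'I_d}) : {ffun 'I_d -> V} := [ffun i => nth v (N v) (s i)].

Lemma Fmk_inj v : injective (Fmk v).
Proof.
move=> s s' /ffunP H; apply/permP => i; have := H i; rewrite !ffunE => /eqP.
by rewrite nth_uniq ?Nsize // => /eqP /val_inj.
Qed.

Definition cfg := seq (V * {ffun 'I_d -> V}).

Definition allcfg (ws : seq V) : seq cfg :=
  foldr (fun w acc => [seq (w, Fmk w s) :: c | s <- enum {perm 'I_d}, c <- acc]) [:: [::]] ws.

Lemma allcfg_mem (g : V -> {perm 'I_d}) ws : [seq (w, Fmk w (g w)) | w <- ws] \in allcfg ws.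
Proof.
elim: ws => [|w ws IH] /=; first by rewrite mem_seq1.
by apply: (allpairs_f (fun s c => (w, Fmk w s) :: c)); rewrite ?mem_enum.
Qed.

Lemma allcfg_shape ws c : c \in allcfg ws -> map fst c = ws.
Proof.
elim: ws c => [|w ws IH] c /=; first by rewrite mem_seq1 => /eqP ->.
by case/allpairsP => [[s c'] [_ /= Hc ->]] /=; rewrite IH.
Qed.

Definition w1 : rat := ((d`!)%:R)^-1.

Lemma w1_ge0 : 0 <= w1. Proof. by rewrite invr_ge0 ler0n. Qed.
Lemma w1_le1 : w1 <= 1.
Proof. by rewrite invf_le1 ?ltr0n ?fact_gt0 // ler1n fact_gt0. Qed.

Lemma cw_ge0 (c : cfg) : 0 <= cyl_weight c.
Proof. by rewrite /cyl_weight exprn_ge0 // -/w1 w1_ge0. Qed.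

Lemma cw_cat (c1 c2 : cfg) : cyl_weight (c1 ++ c2) = cyl_weight c1 * cyl_weight c2.
Proof. by rewrite /cyl_weight size_cat exprD. Qed.

Lemma allcfg_sum ws : \sum_(c <- allcfg ws) cyl_weight c = 1.
Proof.
elim: ws => [|w ws IH] /=; first by rewrite big_seq1 /cyl_weight expr0.
rewrite big_allpairs_dep.
transitivity (\sum_(s <- enum {perm 'I_d}) w1).
  apply: eq_bigr => s _; rewrite -[RHS]mulr1 -IH mulr_sumr.
  by apply: eq_bigr => c _; rewrite /cyl_weight /= exprS.
rewrite big_enum sumr_const /= card_Sn /w1 -[_ *+ _]mulr_natr mulVf // pnatr_eq0 -lt0n fact_gt0 //.
Qed.


Lemma sum_filter_le (T : eqType) (r : seq T) (P : pred T) (F : T -> rat) :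
  (forall x, 0 <= F x) -> \sum_(x <- r | P x) F x <= \sum_(x <- r) F x.
Proof.
move=> H; rewrite [X in _ <= X](bigID P) /= lerDl sumr_ge0 //.
Qed.

Lemma block_sum ws g : g \in allcfg ws ->
  \sum_(c <- allcfg ws | c != g) cyl_weight c <= 1 - w1 ^+ size ws.
Proof.
move=> Hg; rewrite -(allcfg_sum ws) !(perm_big _ (perm_to_rem Hg)) !big_cons eqxx /=.
have -> : cyl_weight g = w1 ^+ size ws.
  by rewrite /cyl_weight -(allcfg_shape Hg) size_map.
by rewrite addrC addrK sum_filter_le // => c; apply: cw_ge0.
Qed.

Definition cov (bs : seq (seq V * cfg)) : seq cfg :=
  foldr (fun b acc => [seq c1 ++ c2 | c1 <- [seq c <- allcfg b.1 | c != b.2], c2 <- acc])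
    [:: [::]] bs.

Lemma cov_sum bs m : (forall b, b \in bs -> size b.1 = m /\ b.2 \in allcfg b.1) ->
  \sum_(c <- cov bs) cyl_weight c <= (1 - w1 ^+ m) ^+ size bs.
Proof.
elim: bs => [|b bs IH] Hb /=; first by rewrite big_seq1 /cyl_weight !expr0.
have [Hs Hg] := Hb b (mem_head _ _).
have IH' := IH (fun b' H => Hb b' ltac:(by rewrite inE H orbT)).
have Ha : 0 <= 1 - w1 ^+ m by rewrite subr_ge0 exprn_ile1 ?w1_ge0 ?w1_le1.
rewrite big_allpairs_dep /=.
apply: le_trans (_ : \sum_(c1 <- [seq c <- allcfg b.1 | c != b.2]) cyl_weight c1 * (1 - w1 ^+ m) ^+ size bs <= _).
  apply: ler_sum => c1 _; rewrite (eq_bigr _ (fun c2 _ => cw_cat c1 c2)) -mulr_sumr.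
  by apply: ler_wpM2l; [apply: cw_ge0 | apply: IH'].
rewrite -mulr_suml exprS.
apply: ler_wpM2r; first exact: exprn_ge0.
by rewrite big_filter -Hs; apply: block_sum.
Qed.

Lemma cov_shape bs c : c \in cov bs -> map fst c = flatten [seq b.1 | b <- bs].
Proof.
elim: bs c => [|b bs IH] c /=; first by rewrite mem_seq1 => /eqP ->.
case/allpairsP => [[c1 c2] [/= H1 H2 ->]]; rewrite map_cat (IH c2 H2).
by move: H1; rewrite mem_filter => /andP [_ /allcfg_shape ->].
Qed.

Lemma cov_mem bs (g : V -> {perm 'I_d}) :
  (forall b, b \in bs -> [seq (w, Fmk w (g w)) | w <- b.1] != b.2) ->
  flatten [seq [seq (w, Fmk w (g w)) | w <- b.1] | b <- bs] \in cov bs.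
Proof.
elim: bs => [|b bs IH] Hb /=; first by rewrite mem_seq1.
apply: (allpairs_f (fun c1 c2 => c1 ++ c2)).
  by rewrite mem_filter allcfg_mem andbT; apply: Hb; rewrite mem_head.
by apply: IH => b' H; apply: Hb; rewrite inE H orbT.
Qed.

Lemma cov_nonempty bs : (forall b, b \in bs -> exists c, c \in allcfg b.1 /\ c != b.2) ->
  exists c, c \in cov bs.
Proof.
elim: bs => [|b bs IH] Hb /=; first by exists [::]; rewrite mem_seq1.
have [c [H1 H2]] := Hb b (mem_head _ _).
have [c' Hc'] := IH (fun b' H => Hb b' ltac:(by rewrite inE H orbT)).
exists (c ++ c'); apply: (allpairs_f (fun c1 c2 => c1 ++ c2)) => //.
by rewrite mem_filter H1 H2.
Qed.

End Cyl.

Lemma bern (a : rat) K : 0 <= a -> a <= 1 -> (1 - a) ^+ K * (1 + K%:R * a) <= 1.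
Proof.
move=> a0 a1; elim: K => [|K IH]; first by rewrite expr0 mul0r addr0 mulr1.
rewrite exprSr -mulrA; apply: le_trans IH; apply: ler_wpM2l.
  by apply: exprn_ge0; rewrite subr_ge0.
rewrite -natr1; have := ler0n rat K => HK.
have : 0 <= (K%:R + 1) * (a * a) by rewrite mulr_ge0 // ?addr_ge0 // mulr_ge0.
nra.
Qed.

Lemma exK (a e : rat) : 0 < a -> a <= 1 -> 0 < e -> exists K, (1 - a) ^+ K <= e.
Proof.
move=> a0 a1 e0; set K := Num.Def.archi_bound (a * e)^-1.
have H : (a * e)^-1 < K%:R by apply: archi_boundP; rewrite invr_ge0 mulr_ge0 // ltW.
exists K.
have H2 : 1 < K%:R * (a * e).
  by rewrite -ltr_pdivrMr ?mulr_gt0 // mul1r.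
have HP : 0 <= (1 - a) ^+ K by apply: exprn_ge0; rewrite subr_ge0.
have HB := bern K (ltW a0) a1.
set P := (1 - a) ^+ K in HP HB *.
have HK := ler0n rat K.
have : P * 1 <= P * (e * (1 + K%:R * a)) by apply: ler_wpM2l => //; nra.
nra.
Qed.

Lemma geo (eps : rat) M : \sum_(k < M) eps / 2%:R ^+ k.+1 = eps - eps / 2%:R ^+ M.
Proof.
elim: M => [|M IH]; first by rewrite big_ord0 expr0 divr1 subrr.
rewrite big_ord_recr /= IH !exprS.
have H : (2%:R : rat) ^+ M != 0 by rewrite expf_neq0 // pnatr_eq0.
by field.
Qed.

Lemma flat_prefix (T : Type) (L : nat -> seq T) a c :
  flatten (mkseq L (a + c)) = flatten (mkseq L a) ++ flatten (mkseq (fun j => L (a + j)%N) c).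
Proof.
by rewrite /mkseq iotaD map_cat flatten_cat add0n -[a in iota a c]addn0 iotaDl -map_comp.
Qed.

Lemma flat_size (T : Type) (L : nat -> seq T) j :
  (forall k, 0 < size (L k))%N -> (j <= size (flatten (mkseq L j)))%N.
Proof.
move=> H; elim: j => [|j IH] //.
have -> : mkseq L j.+1 = mkseq L (j + 1) by rewrite addn1.
rewrite flat_prefix size_cat /= cats0; move: IH (H (j + 0)%N); lia.
Qed.

Lemma flat_nth (T : Type) (L : nat -> seq T) x0 a b i :
  (i < size (flatten (mkseq L a)))%N -> (i < size (flatten (mkseq L b)))%N ->
  nth x0 (flatten (mkseq L a)) i = nth x0 (flatten (mkseq L b)) i.
Proof.
wlog Hab : a b / (a <= b)%N.
  move=> W Ha Hb; case: (leqP a b) => H; first exact: W.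
  by symmetry; apply: W => //; apply: ltnW.
by move=> Ha _; rewrite -(subnKC Hab) flat_prefix nth_cat Ha.
Qed.

Local Close Scope ring_scope.

Lemma choice_fun (A B : Type) (P : A -> B -> Prop) :
  (forall a, exists b, P a b) -> exists f, forall a, P a (f a).
Proof.
move=> H; exists (fun a => proj1_sig (constructive_indefinite_description _ (H a))).
by move=> a; case: (constructive_indefinite_description _ (H a)).
Qed.

Lemma walk_nth (V : countType) d (lab : V -> 'I_d -> V) x t (p0 : 'I_d) :
  (forall i, i < size t -> lab (nth x (x :: t) i) (iter i (@ordS d) p0) = nth x t i) ->
  forall i, i <= size t -> basic_walk lab x p0 i = (nth x (x :: t) i, iter i (@ordS d) p0).
Proof.
move=> H; elim => [|i IH] Hi //=.
by rewrite IH ?(ltnW Hi) //= H.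
Qed.

Lemma walk_visits (V : countType) d (lab : V -> 'I_d -> V) x t (p0 : 'I_d) :
  (forall i, i < size t -> lab (nth x (x :: t) i) (iter i (@ordS d) p0) = nth x t i) ->
  uniq (x :: t) -> visits_at_least lab x p0 (size t).+1.
Proof.
move=> H Hu; exists (size t).+1.
have -> : [seq (basic_walk lab x p0 j).1 | j <- iota 0 (size t).+1] = x :: t.
  rewrite -[RHS](mkseq_nth x); apply/eq_in_map => j; rewrite mem_iota /= add0n => Hj.
  by rewrite (walk_nth H).
by rewrite undup_id.
Qed.

Section Block.
Variables (V : countType) (adj : rel V) (d : nat) (N : V -> seq V).
Hypothesis Nuniq : forall v, uniq (N v).
Hypothesis Nsize : forall v, size (N v) = d.
Hypothesis HN : forall v w, adj v w = (w \in N v).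
Hypothesis d2 : 1 < d.

Lemma block_good x t (p0 : 'I_d) : path adj x t -> uniq (x :: t) -> 0 < size t ->
  exists g : cfg V d, [/\ g \in allcfg d N (belast x t),
    exists c, c \in allcfg d N (belast x t) /\ c != g &
    forall lab : V -> 'I_d -> V,
      [seq (w, [ffun i => lab w i]) | w <- belast x t] = g ->
      visits_at_least lab x p0 (size t).+1].
Proof.
move=> Hp Hu Ht.
have Hex : forall w, exists s : {perm 'I_d}, forall i, i < size t -> w = nth x (x :: t) i ->
    nth w (N w) (s (iter i (@ordS d) p0)) = nth x t i.
  move=> w; case: (classic (exists i, i < size t /\ w = nth x (x :: t) i)).
    case=> i [Hi Hw].
    have Hy : nth x t i \in N w by rewrite -HN Hw; apply: (pathP x Hp).
    have Hj : index (nth x t i) (N w) < d by rewrite -(Nsize w) index_mem.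
    exists (tperm (iter i (@ordS d) p0) (Ordinal Hj)) => i' Hi' Hw'.
    have Hii : i' = i.
      apply/eqP; rewrite -(@nth_uniq _ x (x :: t) i' i) //=.
      - by rewrite -Hw' -Hw.
      - by rewrite ltnS ltnW.
      - by rewrite ltnS ltnW.
    by rewrite Hii tpermL /= nth_index.
  by move=> Hno; exists 1%g => i Hi Hw; exfalso; apply: Hno; exists i.
have [gg Hgg] := choice_fun Hex.
exists [seq (w, Fmk N w (gg w)) | w <- belast x t]; split.
- exact: allcfg_mem.
- have o0 : 0 < d by apply: ltnW.
  pose s' := (tperm (Ordinal o0) (Ordinal d2) * gg x)%g.
  exists [seq (w, Fmk N w (if w == x then s' else gg w)) | w <- belast x t]; split.
    exact: allcfg_mem.
  case: t Hp Hu Ht Hgg {Hex} => [|y t] //= _ _ _ _; rewrite eqxx.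
  apply/negP => /eqP [] /(Fmk_inj Nuniq Nsize) /permP /(_ (Ordinal o0)).
  rewrite permM tpermL => /perm_inj /eqP; by rewrite -val_eqE.
- move=> lab /eq_in_map Hlab; apply: walk_visits => // i Hi.
  have Hw : nth x (x :: t) i \in belast x t.
    by rewrite lastI nth_rcons size_belast Hi mem_nth ?size_belast.
  have := Hlab _ Hw => -[] /ffunP /(_ (iter i (@ordS d) p0)); rewrite !ffunE => ->.
  exact: Hgg.
Qed.
End Block.

Section Main.
Variables (V : countType) (adj : rel V) (d : nat) (N : V -> seq V).
Hypothesis adjC : forall v w, adj v w = adj w v.
Hypothesis Nuniq : forall v, uniq (N v).
Hypothesis Nsize : forall v, size (N v) = d.
Hypothesis HN : forall v w, adj v w = (w \in N v).
Hypothesis conn : connected_graph adj.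
Hypothesis inf : infinite_type V.
Hypothesis d2 : 1 < d.
Variable b : V.

Lemma blocks_exist n (X : seq V) K : exists bs : seq (V * seq V),
  [/\ size bs = K,
      forall bt, bt \in bs -> [/\ size bt.2 = n.+1, path adj bt.1 bt.2, uniq (bt.1 :: bt.2) & bt.1 \notin X]
    & uniq (flatten [seq belast bt.1 bt.2 | bt <- bs])].
Proof.
elim: K => [|K [bs [Hs Hb Hu]]]; first by exists [::].
have [x [t [Ht Hp Hxt Hall]]] :=
  long_path adjC HN conn inf b (X ++ flatten [seq belast bt.1 bt.2 | bt <- bs]) n.+1.
exists ((x, t) :: bs); split => /=.
- by rewrite Hs.
- move=> bt; rewrite inE => /orP [/eqP -> /=|/Hb //]; split => //.
  by move: Hall => /andP [Hx _]; move: Hx; rewrite mem_cat negb_or => /andP [].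
- rewrite cat_uniq Hu andbT; apply/andP; split.
    by move: Hxt; rewrite lastI rcons_uniq => /andP [].
  apply/hasPn => y Hy; apply/negP => /mem_belast Hy'.
  by move/allP: Hall => /(_ _ Hy'); rewrite mem_cat Hy orbT.
Qed.

Lemma lab_perm (lab : V -> 'I_d -> V) : labeling adj lab ->
  forall v, exists s : {perm 'I_d}, Fmk N v s = [ffun i => lab v i].
Proof.
move=> Hlab v; have [Hinj Hadj] := Hlab v.
have Hin i : lab v i \in N v by rewrite -HN; apply/(Hadj _).2; exists i.
have Hj i : index (lab v i) (N v) < d by rewrite -(Nsize v) index_mem.
pose f i := Ordinal (Hj i).
have finj : injective f.
  move=> i j /(congr1 val) /= H; apply: Hinj.
  by rewrite -(nth_index v (Hin i)) H nth_index.
by exists (perm finj); apply/ffunP => i; rewrite !ffunE permE /= nth_index.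
Qed.


Lemma visits_mono (lab : V -> 'I_d -> V) v l m n :
  (n <= m)%N -> visits_at_least lab v l m -> visits_at_least lab v l n.
Proof. by move=> H [k Hk]; exists k; apply: leq_trans Hk. Qed.

Lemma cover_exists n (X : seq V) (e : rat) : (0 < e)%R ->
  exists L : seq (cfg V d),
  [/\ exists c, c \in L,
      forall c, c \in L -> uniq (map fst c),
      forall lab, labeling adj lab ->
        (forall p : V * 'I_d, p.1 \notin X -> ~ visits_at_least lab p.1 p.2 n) ->
        exists2 c, c \in L & in_cylinder lab c
    & (\sum_(c <- L) cyl_weight c <= e)%R].
Proof.
move=> e0.
have a0 : (0 < w1 d ^+ n.+1)%R by rewrite exprn_gt0 // invr_gt0 ltr0n fact_gt0.
have a1 : (w1 d ^+ n.+1 <= 1)%R by rewrite exprn_ile1 ?w1_ge0 ?w1_le1.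
have [K HK] := exK a0 a1 e0.
have [bs [Hsz Hbs Hu]] := blocks_exist n X K.
pose p0 : 'I_d := Ordinal (ltnW d2).
have HexG : forall bt : V * seq V, exists g : cfg V d, bt \in bs ->
   [/\ g \in allcfg d N (belast bt.1 bt.2),
    exists c, c \in allcfg d N (belast bt.1 bt.2) /\ c != g &
    forall lab : V -> 'I_d -> V,
      [seq (w, [ffun i => lab w i]) | w <- belast bt.1 bt.2] = g ->
      visits_at_least lab bt.1 p0 (size bt.2).+1].
  move=> bt; case: (boolP (bt \in bs)) => Hin; last by exists [::].
  have [Ht Hp Hxt _] := Hbs bt Hin.
  have [g Hg] := block_good Nuniq Nsize HN d2 p0 Hp Hxt (ltac:(by rewrite Ht)).
  by exists g.
have [G HG] := choice_fun HexG.
pose bs' := [seq (belast bt.1 bt.2, G bt) | bt <- bs].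
exists (cov N bs'); split.
- apply: cov_nonempty => bb /mapP [bt Hbt ->] /=.
  by have [_ Hc _] := HG bt Hbt.
- move=> c /cov_shape ->; rewrite -map_comp.
  by rewrite (eq_map (g := fun bt => belast bt.1 bt.2)).
- move=> lab Hlab Hbad.
  have [gl Hgl] := choice_fun (lab_perm Hlab).
  exists (flatten [seq [seq (w, Fmk N w (gl w)) | w <- bb.1] | bb <- bs']).
    apply: cov_mem => bb /mapP [bt Hbt ->] /=; apply/negP => /eqP Heq.
    have [_ _ Hv] := HG bt Hbt.
    have [_ _ _ HX] := Hbs bt Hbt.
    apply: (Hbad (bt.1, p0) HX); apply: (visits_mono (m := (size bt.2).+1)).
      by have [Ht _ _ _] := Hbs bt Hbt; rewrite Ht; lia.
    apply: Hv; rewrite -Heq; apply: eq_map => w; by rewrite Hgl.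
  move=> p /flatten_mapP [bb _ /mapP [w _ ->]] i /=.
  by rewrite Hgl ffunE.
- apply: le_trans HK; rewrite -Hsz -(size_map (fun bt => (belast bt.1 bt.2, G bt))).
  apply: cov_sum => bb /mapP [bt Hbt ->] /=; split.
    by have [Ht _ _ _] := Hbs bt Hbt; rewrite size_belast.
  by have [Hg _ _] := HG bt Hbt.
Qed.

End Main.

Unset Implicit Arguments.

Theorem proposition4p5 (V : countType) (adj : rel V) (d : nat) :
  simple_graph adj -> regular_graph adj d -> connected_graph adj ->
  infinite_type V ->
  almost_surely adj (fun lab : V -> 'I_d -> V =>
    forall n : nat, forall s : seq (V * 'I_d), exists p : V * 'I_d,
      p \notin s /\ visits_at_least lab p.1 p.2 n).
Proof.
move=> [adjC _] Hreg Hconn Hinf eps eps0.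
have [N HN] : exists N : V -> seq V, forall v,
    [/\ uniq (N v), size (N v) = d & forall w, adj v w = (w \in N v)].
  exact: (choice_fun Hreg).
have Nuniq v : uniq (N v) by have [] := HN v.
have Nsize v : size (N v) = d by have [] := HN v.
have HNv v w : adj v w = (w \in N v) by have [_ _ ->] := HN v.
have [b _] := Hinf [::].
have d2 : (1 < d)%N.
  have [x [t [Ht Hp Hu _]]] := long_path adjC HNv Hconn Hinf b [::] 2.
  case: t Ht Hp Hu => [|y [|z [|]]] //= _ /andP [Hxy /andP [Hyz _]] Hu.
  rewrite -(Nsize y); apply: (@uniq_leq_size _ [:: x; z]).
    by move: Hu; rewrite /= !inE !negb_or => /and3P [/andP [_ ->]].
  by move=> w; rewrite !inE => /orP [] /eqP ->; rewrite -HNv // adjC.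
pose e k : rat := (eps / 2%:R ^+ k.+1)%R.
have e0 k : (0 < e k)%R by rewrite divr_gt0 // exprn_gt0.
have HL : forall k, exists L : seq (cfg V d),
  let nX := odflt (0%N, [::]) (unpickle k) in
  [/\ exists c, c \in L,
      forall c, c \in L -> uniq (map fst c),
      forall lab, labeling adj lab ->
        (forall p : V * 'I_d, p.1 \notin nX.2 -> ~ visits_at_least lab p.1 p.2 nX.1) ->
        exists2 c, c \in L & in_cylinder lab c
    & (\sum_(c <- L) cyl_weight c <= e k)%R].
  move=> k; exact: (cover_exists adjC Nuniq Nsize HNv Hconn Hinf d2 b _ _ (e0 k)).
have [Lk HLk] := choice_fun HL.
have Lne j : (0 < size (Lk j))%N.
  by have [[c Hc] _ _ _] := HLk j; case: (Lk j) Hc.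
pose C m := nth [::] (flatten (mkseq Lk m.+1)) m.
have HC m M : (m < M)%N -> C m = nth [::] (flatten (mkseq Lk M)) m.
  move=> HmM; apply: flat_nth; apply: leq_trans (flat_size _ Lne) => //.
exists C; split.
- move=> m; rewrite /C; case: (ltnP m (size (flatten (mkseq Lk m.+1)))) => H; last first.
    by rewrite nth_default.
  move: (mem_nth [::] H); rewrite /mkseq => /flatten_mapP [j _ Hj].
  by have [_ Hu _ _] := HLk j; apply: Hu.
- move=> lab Hlab Hbad.
  have [n Hn] := not_all_ex_not _ _ Hbad.
  have [s Hs] := not_all_ex_not _ _ Hn.
  pose k := pickle (n, map fst s).
  have [_ _ Hcov _] := HLk k.
  have Hk : odflt (0%N, [::]) (unpickle k) = (n, map fst s) by rewrite /k pickleK.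
  rewrite Hk /= in Hcov.
  have [c Hc Hin] : exists2 c, c \in Lk k & in_cylinder lab c.
    apply: Hcov => // p Hp Hv; apply: Hs; exists p; split => //.
    by apply: contra Hp => /(map_f fst).
  pose F := flatten (mkseq Lk k.+1).
  have HcF : c \in F by rewrite /F /mkseq; apply/flatten_mapP; exists k => //; rewrite mem_iota add0n ltnSn.
  exists (index c F).
  have -> : C (index c F) = nth [::] F (index c F).
    apply: flat_nth; last by rewrite index_mem.
    exact: leq_trans (flat_size _ Lne).
  by rewrite nth_index.
- move=> M.
  pose FM := flatten (mkseq Lk M).
  have HM : (M <= size FM)%N by apply: flat_size.
  rewrite (eq_bigr (fun m : 'I_M => cyl_weight (nth [::] FM m))); last first.
    by move=> m _; rewrite (HC m M).
  apply: (@le_trans _ _ (\sum_(c <- FM) cyl_weight c)%R).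
    rewrite (big_nth [::]) -(big_mkord xpredT (fun m => cyl_weight (nth [::] FM m))).
    rewrite (@big_cat_nat _ _ _ M 0 (size FM)) //= lerDl sumr_ge0 // => i _.
    exact: cw_ge0.
  rewrite big_flatten /= /mkseq big_map.
  apply: (@le_trans _ _ (\sum_(j <- iota 0 M) e j)%R).
    by apply: ler_sum => j _; have [_ _ _ ->] := HLk j.
  have -> : iota 0 M = index_iota 0 M by rewrite /index_iota subn0.
  by rewrite big_mkord geo gerBl // divr_ge0 ?exprn_ge0 // ltW.
Qed.
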